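(* Let $C_1$ and $C_2$ be finite order SISO deterministic programs, both with uniformly distributed secret input, with output distribution vectors $\mathbf{p}_N$ and $\mathbf{p}'_N$ and output sets $\mathcal{O}_N$ and $\mathcal{O}'_N$ respectively. Assume $|\mathcal{O}'_N|\ge 2$ for all sufficiently large $N$. For $\alpha\in(0,\infty]$ let $$f_\alpha=\limsup_{N\to\infty}\frac{IL_\alpha(C_1,N)}{IL_\alpha(C_2,N)},\qquad g_\alpha=\liminf_{N\to\infty}\frac{IL_\alpha(C_1,N)}{IL_\alpha(C_2,N)}.$$ Then, with $\alpha,\beta$ ranging over $(0,\infty]$: 1. (a) $f_\alpha=0$ for some $\alpha$ if and only if $f_\beta=0$ for all $\beta$. (b) $f_\alpha=\infty$ for some $\alpha$ if and only if $f_\beta=\infty$ for all $\beta$. (c) $0<f_\alpha<\infty$ for some $\alpha$ if and only if $0<f_\beta<\infty$ for all $\beta$. 2. (a) $g_\alpha=0$ for some $\alpha$ if and only if $g_\beta=0$ for all $\beta$. (b) $g_\alpha=\infty$ for some $\alpha$ if and only if $g_\beta=\infty$ for all $\beta$. (c) $0<g_\alpha<\infty$ for some $\alpha$ if and only if $0<g_\beta<\infty$ for all $\beta$.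
   Context: A SISO deterministic program $C$ is a family indexed by $N\in\mathbb{N}^+$: for each $N$, a random variable $A$ uniformly distributed on $\mathcal{A}_N=\{0,1,\dots,N-1\}$, and a surjective map $F_N$ from $\mathcal{A}_N$ onto a finite set $\mathcal{O}_N$. The output is $O=F_N(A)$, and $\mathbf{p}_N$ denotes its distribution vector, so $\mathbf{p}_N(o)=|F_N^{-1}(o)|/N$. $C$ is of finite order if $\sup_N\|\mathbf{p}_N\|_0<\infty$, where $\|\mathbf{p}\|_0$ is the number of nonzero entries of $\mathbf{p}$. For a probability vector $\mathbf{p}$ and $\alpha\in(0,\infty]$, the Rényi entropy is $H_\alpha(\mathbf{p})=\frac{1}{1-\alpha}\log\sum_i p_i^\alpha$ for $\alpha\notin\{1,\infty\}$. The limiting cases are $H_1(\mathbf{p})=-\sum_i p_i\log p_i$ and $H_\infty(\mathbf{p})=-\log\max_i p_i$. The $\alpha$-information leakage is $IL_\alpha(C,N)=H_\alpha(\mathbf{p}_N)$. Both programs are evaluated at the same $N$. *)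

(* Defs.v *)
From HB Require Import structures.
From mathcomp Require Import all_boot all_order all_algebra.
From mathcomp Require Import all_classical all_reals.
From mathcomp Require Import topology normedtype sequences exp.
Set Implicit Arguments. Unset Strict Implicit. Unset Printing Implicit Defensive.
Import Order.TTheory GRing.Theory Num.Theory.
Local Open Scope ring_scope.

Section Leakage.
Variable R : realType.

(* Output distribution of F_N : 'I_N -> O with A uniform on {0,..,N-1}:
   p_N(o) = |F_N^{-1}(o)| / N. *)
Definition out_dist (N : nat) (O : finType) (F : 'I_N -> O) (o : O) : R :=
  #|[set a | F a == o]|%:R / N%:R.

Definition supp_size (O : finType) (p : O -> R) : nat :=
  #|[set o | p o != 0]|.

(* Renyi entropy H_alpha(p), alpha : \bar R (meaningful for 0 < alpha <= +oo).
   Natural logarithm (base irrelevant for the ratios considered). *)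
Definition renyi (O : finType) (p : O -> R) (a : \bar R) : R :=
  match a with
  | +oo%E => - ln (\big[Num.max/0]_(o : O) p o)
  | (r%:E)%E => if r == 1 then - \sum_(o : O) p o * ln (p o)
                else (1 - r)^-1 * ln (\sum_(o : O) p o `^ r)
  | -oo%E => 0
  end.

Definition leakage (O : nat -> finType) (F : forall N, 'I_N -> O N)
  (a : \bar R) (N : nat) : R :=
  renyi (out_dist (F N)) a.

Definition siso_program (O : nat -> finType) (F : forall N, 'I_N -> O N) :=
  forall N, (0 < N)%N -> forall o : O N, exists a : 'I_N, F N a = o.

Definition finite_order (O : nat -> finType) (F : forall N, 'I_N -> O N) :=
  exists K : nat, forall N, (0 < N)%N -> (supp_size (out_dist (F N)) <= K)%N.

Definition ratio_limsup (O1 O2 : nat -> finType)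
  (F1 : forall N, 'I_N -> O1 N) (F2 : forall N, 'I_N -> O2 N) (a : \bar R)
  : \bar R :=
  limn_esup (fun N => ((leakage F1 a N / leakage F2 a N)%:E)%E).

Definition ratio_liminf (O1 O2 : nat -> finType)
  (F1 : forall N, 'I_N -> O1 N) (F2 : forall N, 'I_N -> O2 N) (a : \bar R)
  : \bar R :=
  limn_einf (fun N => ((leakage F1 a N / leakage F2 a N)%:E)%E).

Definition order_range (a : \bar R) : Prop := (0 < a)%E.

End Leakage.

(* Main.v *)
Require Import Defs.
From HB Require Import structures.
From mathcomp Require Import all_boot all_order all_algebra.
From mathcomp Require Import all_classical all_reals.
From mathcomp Require Import topology normedtype sequences exp.
From mathcomp Require Import ereal ring lra.
Import Order.TTheory GRing.Theory Num.Theory.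
Local Open Scope ring_scope.
Local Open Scope classical_set_scope.
Section SeqLemmas.
Variable R : realType.

Definition ev (P : nat -> Prop) := exists n0, forall n, (n0 <= n)%N -> P n.
Definition fr (P : nat -> Prop) := forall n0, exists2 n, (n0 <= n)%N & P n.

Lemma ev_fr P : ev P -> fr P.
Proof. case=> m hm n0; exists (maxn n0 m); [exact: leq_maxl | apply: hm; exact: leq_maxr]. Qed.
#[global] Arguments ev_fr {P}.

Lemma ev_and P Q : ev P -> ev Q -> ev (fun n => P n /\ Q n).
Proof.
case=> a ha [b hb]; exists (maxn a b) => n hn; split.
  by apply: ha; apply: leq_trans hn; exact: leq_maxl.
by apply: hb; apply: leq_trans hn; exact: leq_maxr.
Qed.
#[global] Arguments ev_and {P Q}.

Lemma ev_mono (P Q : nat -> Prop) : (forall n, P n -> Q n) -> ev P -> ev Q.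
Proof. by move=> h [a ha]; exists a => n /ha /h. Qed.
#[global] Arguments ev_mono {P Q}.

Lemma G1 (v : (\bar R)^nat) x : ev (fun n => v n <= x)%E -> (limn_esup v <= x)%E.
Proof.
case=> n0 hn; rewrite /limn_esup limf_esupE.
apply: ge_ereal_inf; exists (ereal_sup (v @` [set n | (n0 <= n)%N])).
  by exists [set n | (n0 <= n)%N] => //; exists n0.
by apply: ge_ereal_sup => _ [n hn' <-]; exact: hn.
Qed.

Lemma G2 (v : (\bar R)^nat) x : (limn_esup v < x)%E -> ev (fun n => v n < x)%E.
Proof.
rewrite /limn_esup limf_esupE => /ereal_inf_lt [_ [V [n0 _ hV] <-]] hlt.
exists n0 => n hn; apply: le_lt_trans hlt; apply: ereal_sup_ubound; exists n => //.
exact: hV.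
Qed.

Lemma G3 (v : (\bar R)^nat) x : fr (fun n => x <= v n)%E -> (x <= limn_esup v)%E.
Proof.
move=> h; rewrite /limn_esup limf_esupE; apply: le_ereal_inf_tmp => _ [V [n0 _ hV] <-].
have [n hn xv] := h n0; apply: le_ereal_sup_tmp; exists (v n) => //; exists n => //.
exact: hV.
Qed.

Lemma ereal_allge (x : \bar R) : (forall M : R, (M%:E <= x)%E) -> x = +oo%E.
Proof.
case: x => [r h||h] //.
  have := h (r + 1); rewrite lee_fin => ?; exfalso; lra.
by have := h 0.
Qed.

Lemma ereal_allle (x : \bar R) : (forall M : R, (x <= M%:E)%E) -> x = -oo%E.
Proof.
case: x => [r h|h|] //.
  have := h (r - 1); rewrite lee_fin => ?; exfalso; lra.
by have := h 0.
Qed.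

Lemma ereal_le0 (x : \bar R) : (forall e : R, 0 < e -> (x <= e%:E)%E) -> (x <= 0)%E.
Proof.
case: x => [r h|h|] //.
  rewrite lee_fin; rewrite leNgt; apply/negP => r0.
  have := h (r / 2); rewrite lee_fin => ?; exfalso; lra.
by have := h 1 ltr01.
Qed.

Lemma ereal_ge0 (x : \bar R) : (forall e : R, 0 < e -> ((- e)%:E <= x)%E) -> (0 <= x)%E.
Proof.
case: x => [r h||h] //.
  rewrite lee_fin; rewrite leNgt; apply/negP => r0.
  have := h (- r / 2); rewrite lee_fin => ?; exfalso; lra.
by have := h 1 ltr01.
Qed.

Variable u : nat -> R.
Let u' := fun n => (u n)%:E.

Lemma esup_ge0 : ev (fun n => 0 <= u n) -> (0 <= limn_esup u')%E.
Proof. by move=> h; apply: G3; apply: ev_fr; apply: ev_mono h => n; rewrite /u' lee_fin. Qed.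

Lemma esup0P : ev (fun n => 0 <= u n) ->
  (limn_esup u' = 0%E <-> (forall e, 0 < e -> ev (fun n => u n <= e))).
Proof.
move=> h0; split.
  move=> h e e0; have : (limn_esup u' < e%:E)%E by rewrite h lte_fin.
  by move/G2; apply: ev_mono => n; rewrite /u' lte_fin => /ltW.
move=> h; apply: le_anti; rewrite esup_ge0 // andbT.
apply: ereal_le0 => e e0; apply: G1; apply: ev_mono (h e e0) => n.
by rewrite /u' lee_fin.
Qed.

Lemma esupooP : limn_esup u' = +oo%E <-> (forall M, fr (fun n => M <= u n)).
Proof.
split.
  move=> h M; apply: contrapT => hn.
  have : ev (fun n => u' n <= M%:E)%E.
    move: hn; rewrite /fr => /existsNP [n0 hn0]; exists n0 => n hn.
    rewrite /u' lee_fin; apply: ltW; rewrite ltNge; apply/negP => hM.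
    by apply: hn0; exists n.
  by move/G1; rewrite h.
move=> h; apply: ereal_allge => M; apply: G3 => n0.
have [n hn hM] := h M n0; exists n => //; by rewrite /u' lee_fin.
Qed.

Lemma einfE : limn_einf u' = (- limn_esup (fun n => (- u n)%:E))%E.
Proof. by rewrite /limn_einf; congr (- limn_esup _)%E; apply/funext => n. Qed.

Lemma einf_ge0 : ev (fun n => 0 <= u n) -> (0 <= limn_einf u')%E.
Proof.
move=> h; rewrite einfE oppe_ge0; apply: G1; apply: ev_mono h => n.
by rewrite lee_fin oppr_le0.
Qed.

Lemma einf0P : ev (fun n => 0 <= u n) ->
  (limn_einf u' = 0%E <-> (forall e, 0 < e -> fr (fun n => u n <= e))).
Proof.
move=> h0; rewrite einfE; split.
  move=> h e e0; apply: contrapT => hn.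
  have : ev (fun n => (- u n)%:E <= (- e)%:E)%E.
    move: hn; rewrite /fr => /existsNP [n0 hn0]; exists n0 => n hn.
    rewrite lee_fin lerN2; apply: ltW; rewrite ltNge; apply/negP => hM.
    by apply: hn0; exists n.
  move/G1; move/eqP: h; rewrite oppe_eq0 => /eqP ->; rewrite lee_fin; lra.
move=> h; apply/eqP; rewrite oppe_eq0; apply/eqP; apply: le_anti; apply/andP; split.
  apply: G1; apply: ev_mono h0 => n; by rewrite lee_fin oppr_le0.
apply: ereal_ge0 => e e0; apply: G3 => n0; have [n hn hM] := h e e0 n0.
by exists n => //; rewrite lee_fin lerN2.
Qed.

Lemma einfooP : limn_einf u' = +oo%E <-> (forall M, ev (fun n => M <= u n)).
Proof.
rewrite einfE; split.
  move=> h M.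
  have : (limn_esup (fun n => (- u n)%:E) < (- M)%:E)%E.
    suff -> : limn_esup (fun n => (- u n)%:E) = -oo%E by rewrite ltNye.
    by apply: oppe_inj; rewrite h.
  move/G2; apply: ev_mono => n; rewrite lte_fin ltrN2; exact: ltW.
move=> h; suff -> : limn_esup (fun n => (- u n)%:E) = -oo%E by [].
apply: ereal_allle => M; apply: G1; apply: ev_mono (h (- M)) => n.
by rewrite lee_fin lerNl.
Qed.

End SeqLemmas.
Local Close Scope classical_set_scope.
Section Shape.
Variable R : realType.
Implicit Types x y : R.

Definition mg (g x : R) := Num.min x (x `^ g).
Definition Mg (g x : R) := Num.max x (x `^ g).

Lemma powR_invK (g a : R) : 0 < g -> 0 <= a -> (a `^ (g^-1)) `^ g = a.
Proof. by move=> g0 a0; rewrite -powRrM mulVf ?gt_eqF // powRr1. Qed.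
#[global] Arguments powR_invK {g a}.

Lemma powR_mono (g x y : R) : 0 <= g -> 0 <= x -> x <= y -> x `^ g <= y `^ g.
Proof.
move=> g0 x0 xy; apply: ge0_ler_powR => //; rewrite nnegrE //.
exact: le_trans xy.
Qed.
#[global] Arguments powR_mono {g x y}.

Lemma mg_ge0 g x : 0 <= x -> 0 <= mg g x.
Proof. by move=> x0; rewrite /mg le_min x0 powR_ge0. Qed.

Lemma mg_gt0 g x : 0 < x -> 0 < mg g x.
Proof. by move=> x0; rewrite /mg lt_min x0 powR_gt0. Qed.
#[global] Arguments mg_gt0 g {x}.

Lemma mg_mono g x y : 0 <= g -> 0 <= x -> x <= y -> mg g x <= mg g y.
Proof.
move=> g0 x0 xy; rewrite /mg le_min; apply/andP; split.
  by rewrite ge_min xy.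
by rewrite ge_min (powR_mono g0 x0 xy) orbT.
Qed.
#[global] Arguments mg_mono {g x y}.

Lemma Mg_mono g x y : 0 <= g -> 0 <= x -> x <= y -> Mg g x <= Mg g y.
Proof.
move=> g0 x0 xy; rewrite /Mg ge_max; apply/andP; split.
  by rewrite le_max xy.
by rewrite le_max (powR_mono g0 x0 xy) orbT.
Qed.
#[global] Arguments Mg_mono {g x y}.

Lemma Mg_small g x : 0 < g <= 1 -> 0 <= x <= 1 -> Mg g x <= x `^ g.
Proof.
move=> /andP[g0 g1] /andP[x0 x1]; rewrite /Mg ge_max lexx andbT.
move: x0; rewrite le_eqVlt => /predU1P[<-|x0]; first exact: powR_ge0.
by apply: ger1_powR => //; rewrite x0.
Qed.

Lemma mg_big g x : 0 < g <= 1 -> 1 <= x -> x `^ g <= mg g x.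
Proof.
move=> /andP[g0 g1] x1; rewrite /mg le_min lexx andbT.
exact: ler1_powR.
Qed.

Lemma Q1 g (C e : R) : 0 < g <= 1 -> 0 < C -> 0 < e ->
  exists2 eta : R, 0 < eta & forall x, 0 <= x -> x <= eta -> C * Mg g x <= e.
Proof.
move=> /andP[g0 g1] C0 e0; set a := (e / C) `^ (g^-1).
have a0 : 0 < a by apply: powR_gt0; exact: divr_gt0.
exists (Num.min 1 a); first by rewrite lt_min ltr01 a0.
move=> x x0; rewrite le_min => /andP[x1 xa].
have h3 : Mg g x <= x `^ g by apply: Mg_small; [rewrite g0 g1 | rewrite x0 x1].
have h2 : x `^ g <= e / C.
  rewrite -(powR_invK (a := e / C) g0); last by apply: ltW; exact: divr_gt0.
  exact: powR_mono (ltW g0) x0 xa.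
rewrite -ler_pdivlMl // mulrC.
exact: le_trans h3 h2.
Qed.
#[global] Arguments Q1 {g C e}.

Lemma Q2 g (c e : R) : 0 < g <= 1 -> 0 < c -> 0 < e ->
  exists2 eta : R, 0 < eta & forall x, 0 <= x -> c * mg g x <= eta -> x <= e.
Proof.
move=> /andP[g0 g1] c0 e0; have m0 := mg_gt0 g e0.
exists (c * mg g e / 2); first by apply: divr_gt0 => //; exact: mulr_gt0.
move=> x x0 hx; rewrite leNgt; apply/negP => ex.
have := mg_mono (ltW g0) (ltW e0) (ltW ex) => hm.
have : c * mg g e <= c * mg g x by rewrite ler_pM2l.
have : 0 < c * mg g e by exact: mulr_gt0.
lra.
Qed.
#[global] Arguments Q2 {g c e}.

Lemma Q3 g (c M : R) : 0 < g <= 1 -> 0 < c ->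
  exists M' : R, forall x, M' <= x -> M <= c * mg g x.
Proof.
move=> /andP[g0 g1] c0; set b := Num.max M 1 / c.
have b0 : 0 < b by apply: divr_gt0 => //; rewrite lt_max ltr01 orbT.
set a := b `^ (g^-1).
exists (Num.max 1 a) => x; rewrite ge_max => /andP[x1 xa].
have h1 : x `^ g <= mg g x by apply: mg_big => //; rewrite g0 g1.
have h2 : b <= x `^ g.
  rewrite -(powR_invK (a := b) g0) ?(ltW b0) //.
  by apply: powR_mono (ltW g0) _ xa; exact: powR_ge0.
have h3 : Num.max M 1 <= c * mg g x.
  by rewrite mulrC -ler_pdivrMr //; exact: le_trans h2 h1.
apply: le_trans h3; by rewrite le_max lexx.
Qed.
#[global] Arguments Q3 {g c} M.

Lemma Q4 g (C M : R) : 0 < g <= 1 -> 0 < C ->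
  exists M' : R, forall x, 0 <= x -> M' <= C * Mg g x -> M <= x.
Proof.
move=> /andP[g0 g1] C0.
exists (C * Mg g (Num.max M 0) + 1) => x x0 hx; rewrite leNgt; apply/negP => xM.
have h : x <= Num.max M 0 by rewrite le_max (ltW xM).
have := Mg_mono (ltW g0) x0 h => hm.
have : C * Mg g x <= C * Mg g (Num.max M 0) by rewrite ler_pM2l.
lra.
Qed.
#[global] Arguments Q4 {g C} M.

Definition rel (s rho : nat -> R) := exists c C g : R,
  [/\ 0 < c, 0 < C, 0 < g <= 1 &
   ev (fun n => [/\ 0 <= rho n, c * mg g (rho n) <= s n & s n <= C * Mg g (rho n)])].

Definition Zp (u : nat -> R) := forall e, 0 < e -> ev (fun n => u n <= e).
Definition Fo (u : nat -> R) := forall M, fr (fun n => M <= u n).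
Definition Fz (u : nat -> R) := forall e, 0 < e -> fr (fun n => u n <= e).
Definition Eo (u : nat -> R) := forall M, ev (fun n => M <= u n).

Lemma fr_ev P Q : fr P -> ev Q -> fr (fun n => P n /\ Q n).
Proof.
move=> hP [m hm] n0; have [n hn Pn] := hP (maxn n0 m); exists n.
  by apply: leq_trans hn; exact: leq_maxl.
by split => //; apply: hm; apply: leq_trans hn; exact: leq_maxr.
Qed.
#[global] Arguments fr_ev {P Q}.

Lemma fr_mono (P Q : nat -> Prop) : (forall n, P n -> Q n) -> fr P -> fr Q.
Proof. by move=> h hP n0; have [n hn /h] := hP n0; exists n. Qed.
#[global] Arguments fr_mono {P Q}.

Variables s rho : nat -> R.
Hypothesis hr : rel s rho.

Lemma rel_ge0 : ev (fun n => 0 <= s n).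
Proof.
have [c [C [g [c0 C0 g01 he]]]] := hr; apply: ev_mono he => n [r0 h1 h2].
apply: le_trans h1; apply: mulr_ge0; [exact: ltW | exact: mg_ge0].
Qed.

Lemma rel_Zp : Zp s <-> Zp rho.
Proof.
have [c [C [g [c0 C0 g01 he]]]] := hr; split.
  move=> hs e e0; have [eta eta0 heta] := Q2 g01 c0 e0.
  apply: ev_mono (ev_and he (hs eta eta0)) => n [[r0 h1 h2] h3].
  apply: heta => //; exact: le_trans h1 h3.
move=> hs e e0; have [eta eta0 heta] := Q1 g01 C0 e0.
apply: ev_mono (ev_and he (hs eta eta0)) => n [[r0 h1 h2] h3].
apply: le_trans h2 _; exact: heta.
Qed.

Lemma rel_Fz : Fz s <-> Fz rho.
Proof.
have [c [C [g [c0 C0 g01 he]]]] := hr; split.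
  move=> hs e e0; have [eta eta0 heta] := Q2 g01 c0 e0.
  apply: fr_mono (fr_ev (hs eta eta0) he) => n [h3 [r0 h1 h2]].
  apply: heta => //; exact: le_trans h1 h3.
move=> hs e e0; have [eta eta0 heta] := Q1 g01 C0 e0.
apply: fr_mono (fr_ev (hs eta eta0) he) => n [h3 [r0 h1 h2]].
apply: le_trans h2 _; exact: heta.
Qed.

Lemma rel_Fo : Fo s <-> Fo rho.
Proof.
have [c [C [g [c0 C0 g01 he]]]] := hr; split.
  move=> hs M; have [M' hM] := Q4 M g01 C0.
  apply: fr_mono (fr_ev (hs M') he) => n [h3 [r0 h1 h2]].
  apply: hM => //; exact: le_trans h3 h2.
move=> hs M; have [M' hM] := Q3 M g01 c0.
apply: fr_mono (fr_ev (hs M') he) => n [h3 [r0 h1 h2]].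
apply: le_trans h1; exact: hM.
Qed.

Lemma rel_Eo : Eo s <-> Eo rho.
Proof.
have [c [C [g [c0 C0 g01 he]]]] := hr; split.
  move=> hs M; have [M' hM] := Q4 M g01 C0.
  apply: ev_mono (ev_and (hs M') he) => n [h3 [r0 h1 h2]].
  apply: hM => //; exact: le_trans h3 h2.
move=> hs M; have [M' hM] := Q3 M g01 c0.
apply: ev_mono (ev_and (hs M') he) => n [h3 [r0 h1 h2]].
apply: le_trans h1; exact: hM.
Qed.

End Shape.
Arguments mg {R}. Arguments Mg {R}. Arguments rel {R}. Arguments Zp {R}.
Arguments Fo {R}. Arguments Fz {R}. Arguments Eo {R}. Arguments mg_ge0 {R}.
Arguments rel_ge0 {R s rho}. Arguments rel_Zp {R s rho}. Arguments rel_Fo {R s rho}.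
Arguments rel_Fz {R s rho}. Arguments rel_Eo {R s rho}.
Section Dist.
Variable R : realType.

Lemma ln_le {x : R} : 0 < x -> ln x <= x - 1.
Proof.
move=> x0; have h : -1 < x - 1 by lra.
by have := le_ln1Dx h; rewrite (addrC 1) subrK.
Qed.

Lemma ln_ge {x : R} : 0 < x -> 1 - x^-1 <= ln x.
Proof.
move=> x0; have xi : 0 < x^-1 by rewrite invr_gt0.
have := ln_le xi; rewrite lnV ?posrE //; lra.
Qed.

Lemma xln_ge {x : R} : 0 < x -> x - 1 <= x * ln x.
Proof.
move=> x0; have := ln_ge x0 => h.
have : x * (1 - x^-1) <= x * ln x by rewrite ler_pM2l.
by rewrite mulrBr mulr1 mulfV ?gt_eqF.
Qed.

Variables (O : finType) (p : O -> R) (o : O) (K : nat).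
Hypotheses (hp : forall x, 0 < p x) (hs : \sum_x p x = 1)
  (hm : forall x, p x <= p o) (hK : (#|O| <= K)%N).

Let d := 1 - p o.

Lemma sum_oth : \sum_(x | x != o) p x = d.
Proof. by rewrite /d -hs [X in _ = X - _](bigD1 o) //= addrC addrK. Qed.

Lemma q_le_d x : x != o -> p x <= d.
Proof.
move=> xo; rewrite -sum_oth (bigD1 x) //= lerDl; apply: sumr_ge0 => y _; exact: ltW.
Qed.

Lemma d_ge0 : 0 <= d.
Proof. by rewrite -sum_oth; apply: sumr_ge0 => y _; apply: ltW. Qed.

Lemma po_le1 : p o <= 1.
Proof. by have := d_ge0; rewrite /d; lra. Qed.

Lemma K_gt0 : (0 < K)%N.
Proof. have h : (0 < #|O|)%N by apply/card_gt0P; exists o. exact: leq_trans h hK. Qed.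

Lemma sum_const_le {c : R} : 0 <= c -> \sum_(x | x != o) c <= K%:R * c.
Proof.
move=> c0; have h1 : \sum_(x | x != o) c <= \sum_(x : O) c.
  by rewrite [\sum_(x : O) c](bigD1 o) //= lerDr.
apply: le_trans h1 _; rewrite sumr_const -[c *+ _]mulr_natl; apply: ler_wpM2r => //; rewrite ler_nat.
exact: hK.
Qed.

Let kappa : R := K%:R.

Lemma kappa_ge1 : 1 <= kappa.
Proof. by rewrite /kappa ler1n; exact: K_gt0. Qed.

Lemma K_po : 1 <= kappa * p o.
Proof.
rewrite -hs; have h1 : \sum_x p x <= \sum_(x : O) p o by apply: ler_sum => x _.
apply: le_trans h1 _; rewrite sumr_const -[p o *+ _]mulr_natl.
by apply: ler_wpM2r; [exact: ltW | rewrite ler_nat].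
Qed.

Lemma po_inv : (p o)^-1 <= kappa.
Proof. by rewrite -div1r ler_pdivrMr //; exact: K_po. Qed.

Lemma d_le : d <= 1 - kappa^-1.
Proof.
have k0 : 0 < kappa by have := kappa_ge1; lra.
have : kappa^-1 <= p o by rewrite -div1r ler_pdivrMr // mulrC; exact: K_po.
rewrite /d; lra.
Qed.

Lemma d_lt1 : d < 1.
Proof.
have k0 : 0 < kappa^-1 by rewrite invr_gt0; have := kappa_ge1; lra.
have := d_le; lra.
Qed.

Lemma d0_only (h : d = 0) x : x = o.
Proof.
apply/eqP; apply: contraT => xo; have := q_le_d _ xo; have := hp x; rewrite h; lra.
Qed.

Lemma d0_sum (h : d = 0) (f : O -> R) : \sum_x f x = f o.
Proof. by rewrite (bigD1 o) //= big1 ?addr0 // => x xo; rewrite (d0_only h x) eqxx in xo. Qed.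

Lemma d0_po (h : d = 0) : p o = 1.
Proof. by move: h; rewrite /d; lra. Qed.

Lemma Binf : d <= - ln (p o) <= kappa * d.
Proof.
have po0 := hp o; apply/andP; split.
  by have := ln_le po0; rewrite /d; lra.
have pi0 : 0 < (p o)^-1 by rewrite invr_gt0.
have := ln_le pi0; rewrite lnV ?posrE // => h.
have e : (p o)^-1 - 1 = d * (p o)^-1 by rewrite /d mulrBl mul1r mulfV ?gt_eqF.
rewrite e in h; apply: le_trans h _; rewrite mulrC; apply: ler_wpM2r.
  exact: d_ge0.
exact: po_inv.
Qed.

Lemma sum_le_card (f : O -> R) : (forall x, f x <= 1) -> \sum_x f x <= kappa.
Proof.
move=> h; have h1 : \sum_x f x <= \sum_(x : O) 1 by apply: ler_sum => x _.
apply: le_trans h1 _; rewrite sumr_const -[1 *+ _]mulr_natl mulr1 /kappa ler_nat.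
exact: hK.
Qed.

Lemma split_pow (r : R) {x : R} : 0 <= x -> x `^ r * x `^ (1 - r) = x.
Proof.
move=> x0; rewrite -powRD; last by rewrite addrC subrK oner_eq0.
by rewrite addrC subrK powRr1.
Qed.

Lemma Bgt1 r : 1 < r ->
  d <= (1 - r)^-1 * ln (\sum_x p x `^ r) <= (r / (r - 1) * kappa) * d.
Proof.
move=> r1; set S := \sum_x p x `^ r.
have po0 := hp o.
have Slo : p o `^ r <= S.
  by rewrite /S (bigD1 o) //= lerDl; apply: sumr_ge0 => x _; exact: powR_ge0.
have S0 : 0 < S by apply: lt_le_trans Slo; exact: powR_gt0.
have Shi : S <= p o `^ (r - 1).
  rewrite /S; have -> : p o `^ (r - 1) = \sum_x p x * p o `^ (r - 1).
    by rewrite -mulr_suml hs mul1r.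
  apply: ler_sum => x _; rewrite -mulr_powRB1 ?(ltW (hp x)) //; last lra.
  apply: ler_wpM2l; first exact: ltW.
  apply: powR_mono; [lra | exact: ltW | exact: hm].
have L1 : ln S <= (r - 1) * ln (p o).
  by rewrite -ln_powR ler_ln ?posrE ?powR_gt0.
have L2 : r * ln (p o) <= ln S by rewrite -ln_powR ler_ln ?posrE ?powR_gt0.
have /andP[B1 B2] := Binf.
have e : (1 - r)^-1 * ln S = - ln S / (r - 1).
  by field; apply/andP; split; apply/eqP; lra.
rewrite e; apply/andP; split.
  rewrite ler_pdivlMr; last lra.
  nra.
rewrite ler_pdivrMr; last lra.
have -> : r / (r - 1) * kappa * d * (r - 1) = r * (kappa * d).
  by field; apply/eqP; lra.
nra.
Qed.

Lemma sum_oth_pow_ge r : 0 < r < 1 -> 0 < d -> d `^ r <= \sum_(x | x != o) p x `^ r.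
Proof.
move=> /andP[r0 r1] d0.
have h : forall x, x != o -> d `^ r * p x <= p x `^ r * d.
  move=> x xo; have q0 := hp x; have qd := q_le_d _ xo.
  have a := powR_ge0 (p x) r; have b := powR_ge0 d r.
  have c : p x `^ (1 - r) <= d `^ (1 - r) by apply: powR_mono; [lra|exact: ltW|].
  have e1 : d `^ r * p x `^ r * p x `^ (1 - r) = d `^ r * p x.
    by rewrite -mulrA (split_pow r (ltW q0)).
  have e2 : d `^ r * p x `^ r * d `^ (1 - r) = p x `^ r * d.
    by rewrite (mulrC (d `^ r)) -mulrA (split_pow r (ltW d0)).
  rewrite -e1 -e2; apply: ler_wpM2l => //; exact: mulr_ge0.
have h2 : \sum_(x | x != o) d `^ r * p x <= \sum_(x | x != o) p x `^ r * d.
  by apply: ler_sum => x xo; exact: h.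
rewrite -mulr_sumr -mulr_suml sum_oth in h2.
by rewrite -(ler_pM2r d0).
Qed.

Lemma Blt1 r : 0 < r < 1 ->
  (1 - (1 - kappa^-1) `^ (1 - r)) / (kappa * (1 - r)) * d `^ r
    <= (1 - r)^-1 * ln (\sum_x p x `^ r) <= kappa / (1 - r) * d `^ r.
Proof.
move=> /andP[r0 r1]; set S := \sum_x p x `^ r.
have po0 := hp o.
have k1 := kappa_ge1.
have rr : 0 < (1 - r)^-1 by rewrite invr_gt0; lra.
have [dz|dpos] := eqVneq d 0.
  rewrite /S (d0_sum dz) (d0_po dz) powR1 ln1 dz powR0 ?gt_eqF //.
  by rewrite !mulr0 lexx.
have d0 : 0 < d by rewrite lt_neqAle eq_sym dpos d_ge0.
have dr0 : 0 < d `^ r by exact: powR_gt0.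
have Sdec : S = p o `^ r + \sum_(x | x != o) p x `^ r by rewrite /S (bigD1 o).
have po1 : p o `^ r <= 1.
  have := @powR_mono _ r (p o) 1 (ltW r0) (ltW po0) po_le1.
  by rewrite powR1.
have Soth : \sum_(x | x != o) p x `^ r <= kappa * d `^ r.
  apply: le_trans _ (sum_const_le (powR_ge0 d r)).
  apply: ler_sum => x xo; apply: powR_mono; [exact: ltW | exact: ltW | exact: q_le_d].
have Sup : S <= 1 + kappa * d `^ r by rewrite Sdec; lra.
have Sge1 : 1 <= S.
  have h1 : d `^ r <= \sum_(x | x != o) p x `^ r by apply: sum_oth_pow_ge => //; rewrite r0 r1.
  have h2 : p o <= p o `^ r by apply: ger1_powR; [rewrite po0 po_le1 | exact: ltW].
  have h3 : d <= d `^ r by apply: ger1_powR; [rewrite d0 (ltW d_lt1) | exact: ltW].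
  rewrite Sdec /d in h3 *; lra.
have S0 : 0 < S by lra.
have lnup : ln S <= kappa * d `^ r.
  have kd0 : 0 <= kappa * d `^ r by apply: mulr_ge0; lra.
  apply: le_trans _ (le_ln1Dx (_ : -1 < kappa * d `^ r)); last lra.
  by rewrite ler_ln ?posrE //; lra.
apply/andP; split; last first.
  have -> : kappa / (1 - r) * d `^ r = (1 - r)^-1 * (kappa * d `^ r).
    by field; apply/eqP; lra.
  by apply: ler_wpM2l => //; exact: ltW.
set w := (1 - kappa^-1) `^ (1 - r).
have ki : 0 < kappa^-1 by rewrite invr_gt0; lra.
have ki1 : kappa^-1 <= 1 by rewrite -div1r ler_pdivrMr; lra.
have dw : d `^ (1 - r) <= w.
  by apply: powR_mono; [lra | exact: d_ge0 | exact: d_le].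
have e1 := split_pow r (ltW d0).
have dd : d <= d `^ r * w.
  by rewrite -{1}e1; apply: ler_wpM2l => //; exact: ltW.
have Slow : 1 - d + d `^ r <= S.
  have h1 : d `^ r <= \sum_(x | x != o) p x `^ r by apply: sum_oth_pow_ge => //; rewrite r0 r1.
  have h2 : p o <= p o `^ r by apply: ger1_powR; [rewrite po0 po_le1 | exact: ltW].
  rewrite Sdec /d; lra.
have Sk : S <= kappa by apply: sum_le_card => x; have := @powR_mono _ r (p x) 1 (ltW r0) (ltW (hp x)); rewrite powR1; apply; apply: le_trans (hm x) po_le1.
have lnlo : (S - 1) / kappa <= ln S.
  apply: le_trans _ (ln_ge S0); rewrite -[1 - S^-1](_ : (S - 1) / S = _); last by field; apply/eqP; lra.
  apply: ler_wpM2l; first lra.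
  by rewrite lef_pV2 ?posrE //; lra.
have key : (1 - w) * d `^ r <= S - 1 by nra.
have -> : (1 - w) / (kappa * (1 - r)) * d `^ r = (1 - r)^-1 * (((1 - w) * d `^ r) / kappa).
  by field; apply/andP; split; apply/eqP; lra.
apply: ler_wpM2l; first exact: ltW.
apply: le_trans _ lnlo; apply: ler_wpM2r; first by apply: ltW.
exact: key.
Qed.

Lemma Bshan :
  2^-1 * (d * (1 - ln d)) <= - \sum_x p x * ln (p x) <= (kappa + 1) * (d * (1 - ln d)).
Proof.
have po0 := hp o.
have k1 := kappa_ge1.
have [dz|dpos] := eqVneq d 0.
  by rewrite (d0_sum dz) (d0_po dz) ln1 dz !mul0r !mulr0 oppr0 lexx.
have d0 : 0 < d by rewrite lt_neqAle eq_sym dpos d_ge0.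
have lnd : ln d <= 0 by apply: ln_le0; exact: (ltW d_lt1).
have lnpo : ln (p o) <= 0 by apply: ln_le0; exact: po_le1.
have Hdec : \sum_x p x * ln (p x) = p o * ln (p o) + \sum_(x | x != o) p x * ln (p x).
  by rewrite (bigD1 o).
(* H >= -ln po >= d *)
have A1 : \sum_x p x * ln (p x) <= ln (p o).
  have -> : ln (p o) = \sum_x p x * ln (p o) by rewrite -mulr_suml hs mul1r.
  apply: ler_sum => x _; apply: ler_wpM2l; first exact: ltW.
  by rewrite ler_ln ?posrE.
have /andP[B1 B2] := Binf.
have A2 : \sum_(x | x != o) p x * ln (p x) <= d * ln d.
  have -> : d * ln d = \sum_(x | x != o) p x * ln d by rewrite -mulr_suml sum_oth.
  apply: ler_sum => x xo; apply: ler_wpM2l; first exact: ltW.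
  by rewrite ler_ln ?posrE //; exact: q_le_d.
have A3 : p o * ln (p o) <= 0 by rewrite mulr_ge0_le0 //; exact: ltW.
have A4 : p o - 1 <= p o * ln (p o) by exact: xln_ge.
have A5 : forall x, x != o -> p x * ln d - d <= p x * ln (p x).
  move=> x xo; have q0 := hp x; have qd := q_le_d _ xo.
  have dq0 : 0 < d / p x by exact: divr_gt0.
  have := ln_le dq0; rewrite ln_div ?posrE // => h.
  have : p x * (ln d - ln (p x)) <= p x * (d / p x - 1) by rewrite ler_pM2l.
  rewrite mulrBr mulrBr mulr1 mulrCA mulfV ?gt_eqF // mulr1.
  lra.
have A6 : d * ln d - kappa * d <= \sum_(x | x != o) p x * ln (p x).
  have h : \sum_(x | x != o) (p x * ln d - d) <= \sum_(x | x != o) p x * ln (p x).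
    by apply: ler_sum => x xo; exact: A5.
  apply: le_trans h; rewrite sumrB -mulr_suml sum_oth lerD2l lerN2.
  exact: sum_const_le (ltW d0).
have ed : d = 1 - p o by [].
have F1 : 0 <= d * - ln d by apply: mulr_ge0; lra.
have F2 : 0 <= kappa * (d * - ln d) by apply: mulr_ge0; lra.
rewrite Hdec in A1 *; apply/andP; split.
  rewrite mulrBr mulr1; lra.
rewrite mulrBr mulr1 mulrDl mul1r; rewrite mulrN in F2 F1.
have : kappa * (d - d * ln d) = kappa * d - kappa * (d * ln d) by rewrite mulrBr.
lra.
Qed.

End Dist.
Arguments ln_le {R x}. Arguments ln_ge {R x}. Arguments xln_ge {R x}.
Definition psi {R : realType} (x : R) := x * (1 - ln x).
Definition phi {R : realType} (a : \bar R) (x : R) : R :=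
  match a with
  | (r%:E)%E => if r == 1 then psi x else if r < 1 then x `^ r else x
  | _ => x
  end.
Definition gam {R : realType} (a : \bar R) : R :=
  match a with
  | (r%:E)%E => if r == 1 then 2^-1 else if r < 1 then r else 1
  | _ => 1
  end.

Section Phi.
Variable R : realType.
Implicit Types x y : R.

Lemma mg_le g x : mg g x <= x /\ mg g x <= x `^ g.
Proof. by rewrite /mg !ge_min !lexx orbT. Qed.

Lemma Mg_ge g x : x <= Mg g x /\ x `^ g <= Mg g x.
Proof. by rewrite /Mg !le_max !lexx orbT. Qed.

Lemma gam_ok (a : \bar R) : (0 < a)%E -> 0 < gam a <= 1.
Proof.
case: a => [r hr||_] //=; last by rewrite ltr01 lexx.
have r0 : 0 < r by move: hr; rewrite ?lte_fin.
case: eqP => _; first by rewrite invr_gt0 ltr0n invf_le1 // ler1n.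
case hr1 : (r < 1); first by rewrite r0 (ltW hr1).
by rewrite ltr01 lexx.
Qed.

Lemma psi_pos {y} : 0 < y -> y <= 1 -> 0 < psi y.
Proof.
move=> y0 y1; rewrite /psi; apply: mulr_gt0 => //.
have := ln_le0 y1; lra.
Qed.

Lemma psi_ge0 {x} : 0 <= x -> x <= 1 -> 0 <= psi x.
Proof.
move=> x0 x1; move: x0; rewrite le_eqVlt => /predU1P[<-|x0].
  by rewrite /psi mul0r.
exact: ltW (psi_pos x0 x1).
Qed.

Lemma phi_pos (a : \bar R) y : (0 < a)%E -> 0 < y -> y <= 1 -> 0 < phi a y.
Proof.
case: a => [r||] //= _ y0 y1.
case: eqP => _; first exact: psi_pos.
by case: (r < 1) => //; exact: powR_gt0.
Qed.

Lemma phi_ge0 (a : \bar R) x : 0 <= x -> x <= 1 -> 0 <= phi a x.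
Proof.
case: a => [r||] //= x0 x1.
case: eqP => _; first exact: psi_ge0.
by case: (r < 1) => //; exact: powR_ge0.
Qed.

Lemma ratio_gen g x y r : 0 < g <= 1 -> 0 <= x -> 0 < y ->
  r = x / y \/ r = (x / y) `^ g ->
  2^-1 * mg g (x / y) <= r <= 3 * Mg g (x / y).
Proof.
move=> /andP[g0 g1] x0 y0 hr.
have rho0 : 0 <= x / y by apply: divr_ge0 => //; exact: ltW.
have [m1 m2] := mg_le g (x / y); have [M1 M2] := Mg_ge g (x / y).
have mg0 := mg_ge0 g _ rho0.
have p0 := powR_ge0 (x / y) g.
by case: hr => ->; apply/andP; split; lra.
Qed.

Lemma ratio_psi x y : 0 <= x -> x <= 1 -> 0 < y -> y <= 1 ->
  2^-1 * mg (2^-1) (x / y) <= psi x / psi y <= 3 * Mg (2^-1) (x / y).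
Proof.
move=> x0 x1 y0 y1.
have py := psi_pos y0 y1.
have [M1 M2] := Mg_ge (2^-1) (x / y).
move: x0; rewrite le_eqVlt => /predU1P[<-|x0].
  rewrite /psi !mul0r /mg /Mg powR0 ?invr_neq0 ?pnatr_eq0 //.
  by rewrite minxx maxxx !mulr0 lexx.
set rho := x / y.
have rho0 : 0 < rho by exact: divr_gt0.
have [m1 m2] := mg_le (2^-1) rho.
have mg0 := mg_ge0 (2^-1) _ (ltW rho0).
set t := rho `^ (2^-1).
have t0 : 0 < t by exact: powR_gt0.
have tt : t * t = rho.
  have h2 : 2^-1 + 2^-1 = 1 :> R by field.
  rewrite /t -powRD; last by rewrite h2 oner_eq0.
  by rewrite h2 powRr1 // ltW.
have lnt : ln rho = 2 * ln t by rewrite /t ln_powR mulrA mulfV ?pnatr_eq0 // mul1r.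
have tlt := xln_ge t0.
have tle := ln_le t0.
set B := 1 - ln y.
have B1 : 1 <= B by have := ln_le0 y1; rewrite /B; lra.
have ex : x = rho * y by rewrite /rho mulrVK ?unitfE ?gt_eqF.
have lnx : ln x = ln rho + ln y by rewrite ex lnM ?posrE.
set L := ln rho.
have eR : psi x / psi y = rho * (B - L) / B.
  rewrite /psi lnx /B -/L; rewrite {1}ex.
  have B1' : 1 <= 1 - ln y := B1.
  field; apply/andP; split; [apply/eqP; lra | by rewrite gt_eqF].
rewrite eR.
have B0 : 0 < B by lra.
have [rle1|rgt1] := leP rho 1.
- have L0 : L <= 0 by rewrite /L; exact: ln_le0.
  have rL : rho * L <= 0 by rewrite mulr_ge0_le0 // ltW.
  apply/andP; split.
    rewrite ler_pdivlMr //.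
    have : mg (2^-1) rho * B <= rho * B by rewrite ler_pM2r.
    nra.
  rewrite ler_pdivrMr //.
  have h1 : - (rho * L) <= 2 * t.
    rewrite /L lnt -tt; nra.
  have h2 : 2 * t <= 2 * t * B by rewrite -{1}(mulr1 (2 * t)) ler_pM2l //; lra.
  have [M1' M2'] := Mg_ge (2^-1) rho; rewrite -/t in M2'.
  have h3 : rho + 2 * t <= 3 * Mg (2^-1) rho by lra.
  have h4 : (rho + 2 * t) * B <= 3 * Mg (2^-1) rho * B by rewrite ler_pM2r.
  nra.
- have L0 : 0 <= L by rewrite /L; apply: ln_ge0; exact: ltW.
  have A1 : 1 <= B - L.
    have := ln_le0 x1; rewrite lnx /B -/L; lra.
  apply/andP; split.
    rewrite ler_pdivlMr //.
    have t1 : 1 <= t.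
      rewrite leNgt; apply/negP => t1.
      have : t * t < 1 * 1 by apply: ltr_pM => //; exact: ltW.
      rewrite tt mul1r; lra.
    have hm : mg (2^-1) rho * B <= t * B by rewrite ler_pM2r.
    have key : t * B <= 2 * rho * (B - L).
      have eL : L = 2 * ln t := lnt.
      rewrite eL in A1 *; rewrite -tt.
      have h1 : 0 <= t * ((2 * t - 1) * (B - 2 * ln t - 1)).
        by apply: mulr_ge0; [lra | apply: mulr_ge0; lra].
      have h2 : 0 <= t * (t - 1 - ln t) by apply: mulr_ge0; lra.
      nra.
    nra.
  rewrite ler_pdivrMr //.
  have : rho * (B - L) <= rho * B by rewrite ler_pM2l //; lra.
  have : rho * B <= 3 * Mg (2^-1) rho * B.
    by rewrite ler_pM2r //; have := Mg_ge (2^-1) rho; lra.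
  lra.
Qed.

Lemma phi_ratio (a : \bar R) x y : (0 < a)%E -> 0 <= x -> x <= 1 -> 0 < y -> y <= 1 ->
  2^-1 * mg (gam a) (x / y) <= phi a x / phi a y <= 3 * Mg (gam a) (x / y).
Proof.
move=> ha x0 x1 y0 y1; have g01 := gam_ok _ ha.
move: ha g01; case: a => [r||] //= _.
- case: eqP => _ g01; first exact: ratio_psi.
  case: (r < 1) g01 => g01; last by apply: ratio_gen => //; left.
  apply: ratio_gen => //; right.
  have yr : 0 < y `^ r by exact: powR_gt0.
  have yn : y `^ r != 0 by rewrite gt_eqF.
  apply: (mulIf yn); rewrite -powRM ?divfK ?gt_eqF //.
    by apply: divr_ge0 => //; exact: ltW.
  exact: ltW.
- by move=> g01; apply: ratio_gen => //; left.
Qed.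

End Phi.
Section Main.
Variable R : realType.

Lemma theta_pos (K : nat) (r : R) : (0 < K)%N -> 0 < r < 1 ->
  0 < 1 - (1 - (K%:R)^-1) `^ (1 - r).
Proof.
move=> K0 /andP[r0 r1].
have k1 : 1 <= (K%:R : R) by rewrite ler1n.
have ki : 0 < (K%:R : R)^-1 by rewrite invr_gt0; lra.
have ki1 : (K%:R : R)^-1 <= 1 by rewrite -div1r ler_pdivrMr; lra.
have h : (1 - (K%:R)^-1) `^ (1 - r) < 1 `^ (1 - r).
  apply: gt0_ltr_powR; rewrite ?nnegrE; lra.
rewrite powR1 in h; lra.
Qed.

Lemma bigmax_po (O : finType) (p : O -> R) (o : O) :
  (forall x, 0 < p x) -> (forall x, p x <= p o) -> \big[Num.max/0]_x p x = p o.
Proof.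
move=> hp hm; apply: le_anti; apply/andP; split.
  by apply: bigmax_le => [|i _]; [exact: ltW | exact: hm].
exact: le_bigmax.
Qed.

Lemma renyi_bounds (K : nat) (a : \bar R) : (0 < K)%N -> (0 < a)%E ->
  exists lo : R, exists hi : R, [/\ 0 < lo, 0 < hi &
   forall (O : finType) (p : O -> R) (o : O),
     (forall x, 0 < p x) -> \sum_x p x = 1 -> (forall x, p x <= p o) -> (#|O| <= K)%N ->
     lo * phi a (1 - p o) <= renyi p a <= hi * phi a (1 - p o)].
Proof.
move=> K0 ha.
have k1 : 1 <= (K%:R : R) by rewrite ler1n.
case: a ha => [r hr||] //.
- have r0 : 0 < r by move: hr; rewrite lte_fin.
  case: (eqVneq r 1) => [r1|r1].
    exists 2^-1, (K%:R + 1); split; [by rewrite invr_gt0 | lra |].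
    move=> O p o hp hs hm hK; rewrite /renyi /phi r1 eqxx /psi.
    exact: (Bshan _ _ _ _ _ hp hs hm hK).
  case: (ltrP r 1) => [rl|rg].
  + set th := 1 - (1 - (K%:R)^-1) `^ (1 - r).
    have th0 : 0 < th by apply: theta_pos => //; rewrite r0 rl.
    exists (th / (K%:R * (1 - r))), (K%:R / (1 - r)); split.
    * apply: divr_gt0 => //; apply: mulr_gt0; lra.
    * apply: divr_gt0; lra.
    move=> O p o hp hs hm hK; rewrite /renyi /phi (negPf r1) rl.
    by apply: (Blt1 _ _ _ _ _ hp hs hm hK); rewrite r0 rl.
  + have rg1 : 1 < r by rewrite lt_neqAle eq_sym r1 rg.
    exists 1, (r / (r - 1) * K%:R); split; [exact: ltr01 | |].
      apply: mulr_gt0; [apply: divr_gt0; lra | lra].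
    move=> O p o hp hs hm hK; rewrite /renyi /phi (negPf r1) ltNge rg /= mul1r.
    exact: (Bgt1 _ _ _ _ _ hp hs hm hK).
- move=> _; exists 1, K%:R; split; [exact: ltr01 | lra |].
  move=> O p o hp hs hm hK; rewrite /renyi /phi mul1r (bigmax_po _ _ _ hp hm).
  exact: (Binf _ _ _ _ _ hp hs hm hK).
Qed.

End Main.
Lemma card_pre (N : nat) (O : finType) (F : 'I_N -> O) :
  (\sum_x #|[set a | F a == x]|)%N = N.
Proof.
have -> : (\sum_x #|[set a | F a == x]| = \sum_x \sum_(a | true && (F a == x)) 1)%N.
  apply: eq_bigr => x _; rewrite -sum1_card; apply: eq_bigl => a.
  by rewrite inE.
by rewrite -(partition_big (fun a => F a) xpredT) // sum1_card card_ord.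
Qed.

Section Prog.
Variable R : realType.
Variables (O : nat -> finType) (F : forall N, 'I_N -> O N).
Hypothesis hF : siso_program F.

Lemma od_pos N : (0 < N)%N -> forall x, 0 < out_dist R (F N) x.
Proof.
move=> hN x; rewrite /out_dist; apply: divr_gt0; last by rewrite ltr0n.
rewrite ltr0n; apply/card_gt0P; have [a ha] := hF N hN x; exists a.
by rewrite inE ha.
Qed.

Lemma od_sum N : (0 < N)%N -> \sum_x out_dist R (F N) x = 1.
Proof.
move=> hN; rewrite /out_dist -mulr_suml -natr_sum card_pre mulfV //.
by rewrite pnatr_eq0 -lt0n.
Qed.

Lemma od_card K N : (0 < N)%N -> (supp_size (out_dist R (F N)) <= K)%N -> (#|O N| <= K)%N.
Proof.
move=> hN; rewrite /supp_size; congr (_ <= _)%N.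
apply: eq_card => x; rewrite !inE; apply/negP => /eqP h.
by have := od_pos N hN x; rewrite h ltxx.
Qed.

Lemma od_max N : (0 < N)%N -> exists o : O N,
  (forall x, out_dist R (F N) x <= out_dist R (F N) o) /\
  \big[Num.max/0]_x out_dist R (F N) x = out_dist R (F N) o.
Proof.
move=> hN; have x0 : O N := F N (Ordinal hN).
have [o _ ho] := @eq_bigmax _ _ _ 0 x0 xpredT (out_dist R (F N)) isT
  (fun x _ => ltW (od_pos N hN x)).
exists o; split => //.
by move=> x; rewrite -ho; exact: le_bigmax.
Qed.

End Prog.
Lemma comb (R : realType) (lo hi H1 H2 u v m M : R) : 0 < lo -> 0 < hi -> 0 <= u -> 0 < v ->
  lo * u <= H1 <= hi * u -> lo * v <= H2 <= hi * v -> m <= u / v <= M -> 0 <= m ->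
  lo / hi * m <= H1 / H2 <= hi / lo * M.
Proof.
move=> lo0 hi0 u0 v0 /andP[a1 a2] /andP[b1 b2] /andP[c1 c2] m0.
have H20 : 0 < H2 by apply: lt_le_trans b1; exact: mulr_gt0.
have uv0 : 0 <= u / v by apply: divr_ge0 => //; exact: ltW.
have lh : 0 <= lo / hi by apply: divr_ge0; exact: ltW.
have hl : 0 <= hi / lo by apply: divr_ge0; exact: ltW.
apply/andP; split.
  apply: le_trans (_ : lo / hi * (u / v) <= _); first by apply: ler_wpM2l.
  rewrite ler_pdivlMr //.
  have : lo / hi * (u / v) * H2 <= lo / hi * (u / v) * (hi * v).
    by apply: ler_wpM2l => //; exact: mulr_ge0.
  have -> : lo / hi * (u / v) * (hi * v) = lo * u.
    by field; apply/andP; split; rewrite gt_eqF.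
  lra.
apply: le_trans (_ : hi / lo * (u / v) <= _); last by apply: ler_wpM2l.
rewrite ler_pdivrMr //.
have : hi / lo * (u / v) * (lo * v) <= hi / lo * (u / v) * H2.
  by apply: ler_wpM2l => //; exact: mulr_ge0.
have -> : hi / lo * (u / v) * (lo * v) = hi * u.
  by field; apply/andP; split; rewrite gt_eqF.
lra.
Qed.

Arguments comb {R lo hi H1 H2 u v m M}.

Section Final.
Variable R : realType.
Variables (O1 O2 : nat -> finType)
  (F1 : forall N, 'I_N -> O1 N) (F2 : forall N, 'I_N -> O2 N).
Hypotheses (h1 : siso_program F1) (h2 : siso_program F2)
  (f1 : finite_order R F1) (f2 : finite_order R F2)
  (h5 : exists N0, forall N, (N0 <= N)%N -> (2 <= #|O2 N|)%N).

Definition rho N : R :=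
  (1 - \big[Num.max/0]_x out_dist R (F1 N) x) / (1 - \big[Num.max/0]_x out_dist R (F2 N) x).
Definition sq (a : \bar R) N : R := leakage F1 a N / leakage F2 a N.

Lemma rel_all a : (0 < a)%E -> rel (sq a) rho.
Proof.
move=> ha.
have [K1 hK1] := f1; have [K2 hK2] := f2; have [N0 hN0] := h5.
set K := maxn (maxn K1 K2) 1.
have K0 : (0 < K)%N by rewrite /K leq_max leqnn orbT.
have K1K : (K1 <= K)%N by rewrite /K leq_max leq_max leqnn.
have K2K : (K2 <= K)%N by rewrite /K leq_max leq_max leqnn orbT.
have [lo [hi [lo0 hi0 hb]]] := renyi_bounds _ _ _ K0 ha.
have g01 := gam_ok _ _ ha.
exists (lo / hi * 2^-1), (hi / lo * 3), (gam a); split => //.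
- by apply: mulr_gt0; [exact: divr_gt0 | rewrite invr_gt0].
- by apply: mulr_gt0; [exact: divr_gt0 | ].
exists (maxn N0 1) => N hN.
have hN1 : (0 < N)%N by apply: leq_trans hN; rewrite leq_max leqnn orbT.
have hN2 : (2 <= #|O2 N|)%N by apply: hN0; apply: leq_trans hN; rewrite leq_max leqnn.
have [o1 [m1 e1]] := od_max R _ _ h1 N hN1.
have [o2 [m2 e2]] := od_max R _ _ h2 N hN1.
set p1 := out_dist R (F1 N) in m1 e1 *.
set p2 := out_dist R (F2 N) in m2 e2 *.
have pp1 := od_pos R _ _ h1 N hN1; have ps1 := od_sum R _ F1 N hN1.
have pp2 := od_pos R _ _ h2 N hN1; have ps2 := od_sum R _ F2 N hN1.
have c1 : (#|O1 N| <= K)%N.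
  by apply: leq_trans K1K; apply: (od_card R _ _ h1 _ N hN1); exact: hK1.
have c2 : (#|O2 N| <= K)%N.
  by apply: leq_trans K2K; apply: (od_card R _ _ h2 _ N hN1); exact: hK2.
have B1 := hb _ p1 o1 pp1 ps1 m1 c1.
have B2 := hb _ p2 o2 pp2 ps2 m2 c2.
have x0 : 0 <= 1 - p1 o1 by exact: (d_ge0 _ _ _ _ pp1 ps1).
have x1 : 1 - p1 o1 <= 1 by rewrite gerBl; exact: ltW (pp1 o1).
have y0 : 0 < 1 - p2 o2.
  have [u [v [_ _ uv]]] := card_gt1P hN2.
  have [w wo] : exists w, w != o2.
    case: (eqVneq u o2) => [uo|uo]; last by exists u.
    by exists v; rewrite -uo eq_sym.
  exact: lt_le_trans (pp2 w) (q_le_d _ _ _ _ pp2 ps2 _ wo).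
have y1 : 1 - p2 o2 <= 1 by rewrite gerBl; exact: ltW (pp2 o2).
have hrat := phi_ratio _ _ _ _ ha x0 x1 y0 y1.
have hrho : rho N = (1 - p1 o1) / (1 - p2 o2) by rewrite /rho -/p1 -/p2 e1 e2.
have r0 : 0 <= rho N by rewrite hrho; apply: divr_ge0 => //; exact: ltW.
have rr0 : 0 <= (1 - p1 o1) / (1 - p2 o2) by rewrite -hrho.
have m0 : 0 <= 2^-1 * mg (gam a) ((1 - p1 o1) / (1 - p2 o2)).
  apply: mulr_ge0; first by rewrite invr_ge0.
  exact: mg_ge0.
have := comb lo0 hi0 (phi_ge0 _ a _ x0 x1) (phi_pos _ _ _ ha y0 y1) B1 B2 hrat m0.
rewrite !mulrA => /andP[l u].
rewrite hrho; split => //.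
Qed.

Lemma tri (x : \bar R) (A B : Prop) : (0 <= x)%E -> (x = 0%E <-> A) -> (x = +oo%E <-> B) ->
  ((0 < x < +oo)%E <-> ~ A /\ ~ B).
Proof.
move=> x0 hA hB; rewrite lt_neqAle ltey x0 andbT; split.
  by move=> /andP[/eqP k1 /eqP k2]; split => [/hA|/hB]; [move=> e; apply: k1 | move=> e; apply: k2].
move=> [nA nB]; apply/andP; split; apply/eqP.
  by move=> e; apply: nA; apply/hA.
by move=> e; apply: nB; apply/hB.
Qed.

Lemma f0 (a : \bar R) : (0 < a)%E -> ratio_limsup F1 F2 a = 0%E <-> Zp rho.
Proof.
move=> ha; have hr := rel_all _ ha.
rewrite /ratio_limsup; rewrite (esup0P _ _ (rel_ge0 hr)); exact: (rel_Zp hr).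
Qed.

Lemma foo (a : \bar R) : (0 < a)%E -> ratio_limsup F1 F2 a = +oo%E <-> Fo rho.
Proof.
move=> ha; have hr := rel_all _ ha.
rewrite /ratio_limsup; rewrite (esupooP _ (sq a)); exact: (rel_Fo hr).
Qed.

Lemma fmid (a : \bar R) : (0 < a)%E -> (0 < ratio_limsup F1 F2 a < +oo)%E <-> ~ Zp rho /\ ~ Fo rho.
Proof.
move=> ha; apply: tri; [|exact: f0|exact: foo].
exact: (esup_ge0 _ _ (rel_ge0 (rel_all _ ha))).
Qed.

Lemma g0 (a : \bar R) : (0 < a)%E -> ratio_liminf F1 F2 a = 0%E <-> Fz rho.
Proof.
move=> ha; have hr := rel_all _ ha.
rewrite /ratio_liminf; rewrite (einf0P _ _ (rel_ge0 hr)); exact: (rel_Fz hr).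
Qed.

Lemma goo (a : \bar R) : (0 < a)%E -> ratio_liminf F1 F2 a = +oo%E <-> Eo rho.
Proof.
move=> ha; have hr := rel_all _ ha.
rewrite /ratio_liminf; rewrite (einfooP _ (sq a)); exact: (rel_Eo hr).
Qed.

Lemma gmid (a : \bar R) : (0 < a)%E -> (0 < ratio_liminf F1 F2 a < +oo)%E <-> ~ Fz rho /\ ~ Eo rho.
Proof.
move=> ha; apply: tri; [|exact: g0|exact: goo].
exact: (einf_ge0 _ _ (rel_ge0 (rel_all _ ha))).
Qed.

End Final.

Lemma final_iff (R : realType) (P : \bar R -> Prop) (Q : Prop) :
  (forall a, order_range a -> (P a <-> Q)) ->
  ((exists a, order_range a /\ P a) <-> (forall b, order_range b -> P b)).
Proof.
move=> h; split.
  by move=> [a [ha Pa]] b hb; apply/(h b hb); apply/(h a ha).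
move=> H; exists (+oo%E); have ho : order_range (+oo%E : \bar R) by rewrite /order_range ltry.
by split => //; exact: H.
Qed.

Theorem proposition2 (R : realType)
  (O1 O2 : nat -> finType)
  (F1 : forall N, 'I_N -> O1 N) (F2 : forall N, 'I_N -> O2 N) :
  siso_program F1 -> siso_program F2 ->
  finite_order R F1 -> finite_order R F2 ->
  (exists N0, forall N, (N0 <= N)%N -> (2 <= #|O2 N|)%N) ->
  let f := ratio_limsup (R := R) F1 F2 in
  let g := ratio_liminf (R := R) F1 F2 in
  [/\ ((exists a, order_range a /\ f a = 0%E) <->
         (forall b, order_range b -> f b = 0%E)),
      ((exists a, order_range a /\ f a = +oo%E) <->
         (forall b, order_range b -> f b = +oo%E)) &
      ((exists a, order_range a /\ (0 < f a < +oo)%E) <->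
         (forall b, order_range b -> (0 < f b < +oo)%E))]
  /\
  [/\ ((exists a, order_range a /\ g a = 0%E) <->
         (forall b, order_range b -> g b = 0%E)),
      ((exists a, order_range a /\ g a = +oo%E) <->
         (forall b, order_range b -> g b = +oo%E)) &
      ((exists a, order_range a /\ (0 < g a < +oo)%E) <->
         (forall b, order_range b -> (0 < g b < +oo)%E))].
Proof.
move=> h1 h2 fo1 fo2 h5 f g.
split; split.
- apply: (@final_iff R (fun a => f a = 0%E)) => a ha.
  exact: (@f0 _ _ _ _ _ h1 h2 fo1 fo2 h5 a ha).
- apply: (@final_iff R (fun a => f a = +oo%E)) => a ha.
  exact: (@foo _ _ _ _ _ h1 h2 fo1 fo2 h5 a ha).
- apply: (@final_iff R (fun a => (0 < f a < +oo)%E)) => a ha.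
  exact: (@fmid _ _ _ _ _ h1 h2 fo1 fo2 h5 a ha).
- apply: (@final_iff R (fun a => g a = 0%E)) => a ha.
  exact: (@g0 _ _ _ _ _ h1 h2 fo1 fo2 h5 a ha).
- apply: (@final_iff R (fun a => g a = +oo%E)) => a ha.
  exact: (@goo _ _ _ _ _ h1 h2 fo1 fo2 h5 a ha).
- apply: (@final_iff R (fun a => (0 < g a < +oo)%E)) => a ha.
  exact: (@gmid _ _ _ _ _ h1 h2 fo1 fo2 h5 a ha).
Qed.
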